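(* The Euler–Mascheroni constant $\gamma$ satisfies $$\gamma=1-\frac12\ln 2-\sum_{n=2}^{\infty}\left(\operatorname{arctanh}\!\left(\frac1n\right)-\frac1n\right).$$
   Context: $\gamma=\lim_{N\to\infty}\left(\sum_{n=1}^N\frac1n-\ln N\right)$ is the Euler–Mascheroni constant. *)

(* Defs.v *)
From Stdlib Require Import Reals.
From Coquelicot Require Import Coquelicot.
Open Scope R_scope.

Definition arctanh (x : R) : R := / 2 * ln ((1 + x) / (1 - x)).

Definition harmonic (N : nat) : R := sum_n_m (fun n => / INR n) 1 N.

(* The sequence H_N - ln N whose limit is the Euler-Mascheroni constant. *)
Definition gamma_seq (N : nat) : R := harmonic N - ln (INR N).

(* Main.v *)
Require Import Defs.
From Stdlib Require Import Reals Lra Lia.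
From Coquelicot Require Import Coquelicot.
Open Scope R_scope.

Lemma ln_le_xm1 (x : R) : 0 < x -> ln x <= x - 1.
Proof. intros H. pose proof (exp_ineq1_le (ln x)). rewrite exp_ln in H0; lra. Qed.

Lemma INR_pos_S (k : nat) : 0 < INR (S k).
Proof. apply lt_0_INR; lia. Qed.

Definition aa (k : nat) := arctanh (/ INR (k + 2)) - / INR (k + 2).

Lemma aa_eq k : aa k = / 2 * (ln (INR (k + 3)) - ln (INR (k + 1))) - / INR (k + 2).
Proof.
  unfold aa, arctanh. f_equal. f_equal.
  rewrite <- ln_div by (apply lt_0_INR; lia).
  f_equal. rewrite !plus_INR. simpl. pose proof (pos_INR k). field. lra.
Qed.

Lemma harm_S N : harmonic (S N) = harmonic N + / INR (S N).
Proof. unfold harmonic. rewrite sum_n_Sm by lia. reflexivity. Qed.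

Lemma psum N : sum_n aa N =
  / 2 * (ln (INR (N + 3)) + ln (INR (N + 2)) - ln 2) - (harmonic (N + 2) - 1).
Proof.
  induction N.
  - rewrite sum_O, aa_eq. unfold harmonic. simpl.
    rewrite sum_n_Sm by lia. rewrite sum_n_n. simpl. unfold plus; simpl.
    replace (1+1) with 2 by ring. rewrite ln_1. field.
  - rewrite sum_Sn, IHN, aa_eq. change plus with Rplus.
    replace (S N + 2)%nat with (S (N + 2)) by lia. rewrite harm_S.
    replace (S N + 3)%nat with (N + 4)%nat by lia.
    replace (S N + 1)%nat with (N + 2)%nat by lia.
    replace (S (N + 2)) with (N + 3)%nat by lia. lra.
Qed.

Lemma aa_bound k : Rabs (aa k) <= / INR (k + 1) - / INR (k + 2).
Proof.
  rewrite aa_eq. rewrite <- ln_div by (apply lt_0_INR; lia).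
  assert (Hk := pos_INR k).
  rewrite !plus_INR. simpl.
  assert (H1 : 0 < (INR k + (1+1+1)) / (INR k + 1)) by (apply Rdiv_lt_0_compat; lra).
  pose proof (ln_le_xm1 _ H1) as U.
  assert (H2 : 0 < (INR k + 1) / (INR k + (1+1+1))) by (apply Rdiv_lt_0_compat; lra).
  pose proof (ln_le_xm1 _ H2) as L.
  replace ((INR k + 1) / (INR k + (1+1+1))) with (/ ((INR k + (1+1+1)) / (INR k + 1))) in L
    by (field; lra).
  rewrite ln_Rinv in L by lra.
  replace ((INR k + (1+1+1)) / (INR k + 1) - 1) with (2 / (INR k + 1)) in U by (field; lra).
  replace (/ ((INR k + (1+1+1)) / (INR k + 1)) - 1) with (- 2 / (INR k + (1+1+1))) in L by (field; lra).
  apply Rabs_le. split.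
  - assert (/ (INR k + 1) - / (INR k + (1+1)) - (/ (INR k + (1+1)) - / (INR k + (1+1+1))) >= 0).
    { replace (/ (INR k + 1) - / (INR k + (1+1)) - (/ (INR k + (1+1)) - / (INR k + (1+1+1))))
        with (2 / ((INR k + 1) * (INR k + (1+1)) * (INR k + (1+1+1)))) by (field; lra).
      apply Rle_ge, Rlt_le, Rdiv_lt_0_compat; [lra|]. apply Rmult_lt_0_compat; [apply Rmult_lt_0_compat|]; lra. }
    assert (/ (INR k + (1+1+1)) <= / 2 * ln ((INR k + (1+1+1)) / (INR k + 1))).
    { replace (/ (INR k + (1+1+1))) with (/ 2 * (2 / (INR k + (1+1+1)))) by (field; lra).
      apply Rmult_le_compat_l; lra. }
    lra.
  - replace (/ (INR k + 1)) with (/2 * (2 / (INR k + 1))) by (field; lra). lra.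
Qed.

Lemma tele_series : is_series (fun k => / INR (k + 1) - / INR (k + 2)) 1.
Proof.
  unfold is_series. change (is_lim_seq (sum_n (fun k => / INR (k + 1) - / INR (k + 2))) 1).
  apply is_lim_seq_ext with (fun N => 1 - / INR (N + 2)).
  - intros N. induction N.
    + rewrite sum_O. simpl. lra.
    + rewrite sum_Sn, <- IHN. change plus with Rplus; cbv beta.
      replace (S N + 1)%nat with (N + 2)%nat by lia. replace (S N + 2)%nat with (N + 3)%nat by lia. lra.
  - replace (Finite 1) with (Rbar_minus 1 0) by (simpl; f_equal; ring).
    apply is_lim_seq_minus'. apply is_lim_seq_const.
    replace (Finite 0) with (Rbar_inv p_infty) by reflexivity.
    apply is_lim_seq_inv; [|discriminate].
    apply (is_lim_seq_incr_n INR 2). apply is_lim_seq_INR.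
Qed.

Lemma small_lim : is_lim_seq (fun N => / 2 * (ln (INR (N + 3)) - ln (INR (N + 2)))) 0.
Proof.
  apply is_lim_seq_le_le with (u := fun _ => 0) (w := fun N => / 2 * / INR (N + 2)).
  - intros N. rewrite <- ln_div by (apply lt_0_INR; lia).
    assert (Hk := pos_INR N). rewrite !plus_INR; simpl.
    assert (H1 : 0 < (INR N + (1+1+1)) / (INR N + (1+1))) by (apply Rdiv_lt_0_compat; lra).
    pose proof (ln_le_xm1 _ H1) as U.
    replace ((INR N + (1+1+1)) / (INR N + (1+1)) - 1) with (/ (INR N + (1+1))) in U by (field; lra).
    assert (0 <= ln ((INR N + (1+1+1)) / (INR N + (1+1)))).
    { rewrite <- ln_1. destruct (Req_dec ((INR N + (1+1+1)) / (INR N + (1+1))) 1) as [E|E].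
      - rewrite E; lra.
      - left. apply ln_increasing; [lra|].
        apply (Rmult_lt_reg_r (INR N + (1+1))); [lra|]. field_simplify; lra. }
    split; [lra|]. apply Rmult_le_compat_l; lra.
  - apply is_lim_seq_const.
  - replace (Finite 0) with (Rbar_mult (/2) 0) by (simpl; f_equal; ring).
    apply is_lim_seq_scal_l.
    replace (Finite 0) with (Rbar_inv p_infty) by reflexivity.
    apply is_lim_seq_inv; [|discriminate].
    apply (is_lim_seq_incr_n INR 2). apply is_lim_seq_INR.
Qed.

Theorem corollary1p3 :
  exists S : R,
    is_series (fun k : nat => arctanh (/ INR (k + 2)) - / INR (k + 2)) S /\
    is_lim_seq gamma_seq (1 - / 2 * ln 2 - S).
Proof.
  assert (Ex : ex_series aa).
  { apply (@ex_series_le R_AbsRing R_CompleteNormedModule aa (fun k => / INR (k + 1) - / INR (k + 2))).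
    - intros n. apply aa_bound.
    - exists 1. apply tele_series. }
  exists (Series aa). split.
  - apply (Series_correct aa Ex).
  - apply (is_lim_seq_incr_n gamma_seq 2).
    apply is_lim_seq_ext with
      (fun N => (1 - / 2 * ln 2 - sum_n aa N) + / 2 * (ln (INR (N + 3)) - ln (INR (N + 2)))).
    + intros N. unfold gamma_seq. rewrite psum. lra.
    + replace (Finite (1 - / 2 * ln 2 - Series aa))
        with (Rbar_plus (1 - / 2 * ln 2 - Series aa) 0) by (simpl; f_equal; ring).
      apply is_lim_seq_plus'; [|apply small_lim].
      apply is_lim_seq_minus'; [apply is_lim_seq_const|].
      apply (Series_correct aa Ex).
Qed.
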